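(* Let $R$ be a principal ideal domain, let $\mathcal A$ be the category of finitely generated $R$-modules, and let $\mathcal C$ be a triangulated subcategory of $\mathcal A$. Let $p$ be a nonzero prime element of $R$ and let $M \in \mathcal C$ be a module whose $p$-torsion part is isomorphic to $(R/p)^r$. Then for any expression $r=\sum_i r_i$ of $r$ as a sum of non-negative integers, there exists a module $N\in\mathcal C$ whose $p$-torsion part is isomorphic to $\bigoplus_i R/(p^{r_i})$ and whose $q$-torsion part is isomorphic to that of $M$ for every prime $q\neq p$.
   Context: A full additive subcategory $\mathcal C$ of $\mathcal A$ is triangulated if whenever two of the three terms of a short exact sequence of $R$-modules in $\mathcal A$ belong to $\mathcal C$, so does the third. For a finitely generated module $M$ and a prime $p$, the $p$-torsion part of $M$ is the submodule of elements annihilated by some power of $p$. *)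

(* Defs.v *)
From HB Require Import structures.
From mathcomp Require Import all_boot all_order all_algebra.
Set Implicit Arguments. Unset Strict Implicit. Unset Printing Implicit Defensive.
Import GRing.Theory.
Local Open Scope ring_scope.

Definition rdvd (R : comNzRingType) (a b : R) : Prop := exists c, b = c * a.

Definition is_ideal (R : comNzRingType) (I : R -> Prop) : Prop :=
  [/\ I 0, (forall x y, I x -> I y -> I (x + y)) & (forall a x, I x -> I (a * x))].

Definition is_PID (R : idomainType) : Prop :=
  forall I : R -> Prop, is_ideal I -> exists g : R, forall x, I x <-> rdvd g x.

Definition prime_elt (R : idomainType) (p : R) : Prop :=
  [/\ p != 0, ~ (p \is a GRing.unit)
    & forall a b, rdvd p (a * b) -> rdvd p a \/ rdvd p b].

Definition associated (R : comNzRingType) (p q : R) : Prop := rdvd p q /\ rdvd q p.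

Definition fin_gen (R : comNzRingType) (M : lmodType R) : Prop :=
  exists k : nat, exists e : 'I_k -> M,
    forall x : M, exists c : 'I_k -> R, x = \sum_(i < k) c i *: e i.

Definition short_exact (R : comNzRingType) (A B C : lmodType R)
    (f : {linear A -> B}) (g : {linear B -> C}) : Prop :=
  [/\ injective f, (forall z, exists y, g y = z)
    & forall y, g y = 0 <-> exists x, f x = y].

(* A full additive subcategory C (a class of modules) of the category of
   finitely generated R-modules which is triangulated (2-out-of-3 for SES). *)
Definition triangulated_subcat (R : comNzRingType) (C : lmodType R -> Prop) : Prop :=
  [/\ (forall M, C M -> fin_gen M),
      (exists Z : lmodType R, C Z /\ forall z : Z, z = 0),
      (forall M1 M2 : lmodType R, C M1 -> C M2 -> C (M1 * M2)%type)
    & forall (A B D : lmodType R) (f : {linear A -> B}) (g : {linear B -> D}),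
        fin_gen A -> fin_gen B -> fin_gen D -> short_exact f g ->
        [/\ (C A -> C B -> C D), (C A -> C D -> C B) & (C B -> C D -> C A)]].

Definition torsion_part (R : comNzRingType) (M : lmodType R) (p : R) : M -> Prop :=
  fun x => exists n : nat, p ^+ n *: x = 0.
Arguments torsion_part {R} M p _.

(* The submodule A of M is isomorphic to the direct sum (+)_i R/(s_i),
   written out literally: there is an R-linear bijection from
   (+)_{i < size s} R/(s_i) onto A, i.e. elements e_i of A such that
   [c] |-> \sum_i c_i e_i is well defined, injective and onto A. *)
Definition iso_cyclic_sum (R : comNzRingType) (M : lmodType R) (A : M -> Prop)
    (s : seq R) : Prop :=
  exists e : 'I_(size s) -> M,
    [/\ (forall i, A (e i)),
        (forall x, A x -> exists c : 'I_(size s) -> R, x = \sum_(i < size s) c i *: e i)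
      & forall c : 'I_(size s) -> R,
          \sum_(i < size s) c i *: e i = 0 <-> forall i : 'I_(size s), rdvd (s`_i) (c i)].

Definition iso_sub (R : comNzRingType) (M N : lmodType R) (A : M -> Prop) (B : N -> Prop) : Prop :=
  exists f : M -> N,
    [/\ (forall a x y, A x -> A y -> f (a *: x + y) = a *: f x + f y),
        (forall x, A x -> B (f x)),
        (forall x y, A x -> A y -> f x = f y -> x = y)
      & forall y, B y -> exists2 x, A x & f x = y].

(* Main.v *)
Require Import Defs.
From HB Require Import structures.
From mathcomp Require Import all_boot all_order all_algebra.
From mathcomp Require Import ring zify.
From Stdlib Require Import ClassicalEpsilon FunctionalExtensionality PropExtensionality Classical.
Set Implicit Arguments. Unset Strict Implicit. Unset Printing Implicit Defensive.
Import GRing.Theory.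
Local Open Scope ring_scope.

Section Arith.
Variable (R : idomainType).

Lemma rdvd_refl (a : R) : rdvd a a. Proof. by exists 1; rewrite mul1r. Qed.
Lemma rdvd0 (a : R) : rdvd a 0. Proof. by exists 0; rewrite mul0r. Qed.
Lemma rdvdD (a x y : R) : rdvd a x -> rdvd a y -> rdvd a (x + y).
Proof. by move=> [c ->] [d ->]; exists (c + d); rewrite mulrDl. Qed.
Lemma rdvdN (a x : R) : rdvd a x -> rdvd a (- x).
Proof. by move=> [c ->]; exists (- c); rewrite mulNr. Qed.
Lemma rdvdB (a x y : R) : rdvd a x -> rdvd a y -> rdvd a (x - y).
Proof. by move=> h1 h2; apply: rdvdD => //; apply: rdvdN. Qed.
Lemma rdvdMl (a x y : R) : rdvd a x -> rdvd a (y * x).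
Proof. by move=> [c ->]; exists (y * c); rewrite mulrA. Qed.
Lemma rdvdMr (a x y : R) : rdvd a x -> rdvd a (x * y).
Proof. by move=> h; rewrite mulrC; apply: rdvdMl. Qed.
Lemma rdvd_trans (a b c : R) : rdvd a b -> rdvd b c -> rdvd a c.
Proof. by move=> [x ->] [y ->]; exists (y * x); rewrite mulrA. Qed.
Lemma rdvd_mull (a x : R) : rdvd a (x * a). Proof. by exists x. Qed.
Lemma rdvd_sum (I : Type) (a : R) (s : seq I) (P : pred I) (F : I -> R) :
  (forall i, P i -> rdvd a (F i)) -> rdvd a (\sum_(i <- s | P i) F i).
Proof.
move=> H; elim/big_rec: _ => [|i x Pi Hx]; first exact: rdvd0.
by apply: rdvdD => //; apply: H.
Qed.
Lemma rdvd_exp (a : R) (i j : nat) : (i <= j)%N -> rdvd (a ^+ i) (a ^+ j).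
Proof. by move=> hij; exists (a ^+ (j - i)); rewrite -exprD subnK. Qed.
Lemma rdvd_pcancel (c a b : R) : c != 0 -> rdvd (c * a) (c * b) -> rdvd a b.
Proof.
move=> c0 [d Hd]; exists d; apply: (mulfI c0).
by rewrite Hd mulrCA.
Qed.

Lemma rdvd1_unit (a : R) : rdvd a 1 -> a \is a GRing.unit.
Proof. by move=> [c Hc]; apply/unitrP; exists c; split; [rewrite -Hc | rewrite mulrC -Hc]. Qed.

Variable hR : is_PID R.

Lemma bezout_prime (p c : R) : prime_elt p -> ~ rdvd p c ->
  exists a b, a * c + b * p = 1.
Proof.
move=> [p0 pu pP] npc.
set I := fun x : R => exists a b, x = a * c + b * p.
have hI : is_ideal I.
  split.
  - by exists 0, 0; rewrite !mul0r addr0.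
  - move=> x y [a [b ->]] [a' [b' ->]]; exists (a + a'), (b + b').
    by rewrite !mulrDl addrACA.
  - move=> z x [a [b ->]]; exists (z * a), (z * b).
    by rewrite mulrDr !mulrA.
have [g Hg] := hR hI.
have Ip : I p by exists 0, 1; rewrite mul0r add0r mul1r.
have Ic : I c by exists 1, 0; rewrite mul0r addr0 mul1r.
have [h Hh] : rdvd g p by apply/Hg.
have [k Hk] : rdvd g c by apply/Hg.
have : rdvd p (h * g) by rewrite -Hh; apply: rdvd_refl.
case/pP => [[h' Hh']|[g' Hg']].
- have : rdvd g 1.
    exists h'; apply: (mulfI p0).
    rewrite mulr1 {1}Hh Hh'; ring.
  by move/Hg => [a [b ->]]; exists a, b.
- by exfalso; apply: npc; exists (k * g'); rewrite Hk Hg' mulrA.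
Qed.

Lemma prime_dvd_exp (p q : R) (n : nat) : prime_elt p -> rdvd p (q ^+ n) -> rdvd p q.
Proof.
move=> hp; case: (hp) => [p0 pu pP].
elim: n => [|n IH].
  by rewrite expr0 => /rdvd1_unit.
by rewrite exprS => /pP [] // /IH.
Qed.

Lemma not_dvd_prime_pow (p q : R) (n : nat) : prime_elt p -> prime_elt q ->
  ~ associated p q -> ~ rdvd p (q ^+ n).
Proof.
move=> hp hq nass /(prime_dvd_exp hp) [c Hc].
case: hq => [q0 qu qP].
have : rdvd q (c * p) by rewrite -Hc; apply: rdvd_refl.
case/qP => [[d Hd]|hqp].
- case: hp => [p0 pu _]; apply: pu; apply: rdvd1_unit; exists d.
  apply: (mulfI q0); rewrite mulr1 {1}Hc Hd.
  ring.
- by apply: nass; split => //; exists c.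
Qed.

Lemma bezout_pows (p q : R) (k n : nat) : prime_elt p -> prime_elt q ->
  ~ associated p q -> exists a b, a * p ^+ k + b * q ^+ n = 1.
Proof.
move=> hp hq nass.
have [a [b Hab]] := bezout_prime hp (not_dvd_prime_pow (n:=n) hp hq nass).
elim: k => [|k [a' [b' IH]]].
  by exists 1, 0; rewrite expr0 mul1r mul0r addr0.
exists (a' * b), (b' * (a * q ^+ n + b * p) + a' * p ^+ k * a).
transitivity ((a' * p ^+ k + b' * q ^+ n) * (a * q ^+ n + b * p)).
  rewrite exprS; ring.
by rewrite Hab IH mulr1.
Qed.
End Arith.

Lemma sub_eqS (V : zmodType) (x y z w : V) : x + y = z + w -> x - z = w - y.
Proof. by move=> E; apply/eqP; rewrite subr_eq addrAC [w + z]addrC -E addrK. Qed.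
Record submod (R : pzRingType) (W : lmodType R) := Submod {
  sm_pred :> W -> Prop;
  sm0 : sm_pred 0;
  smD : forall x y, sm_pred x -> sm_pred y -> sm_pred (x + y);
  smZ : forall a x, sm_pred x -> sm_pred (a *: x) }.

Section Quot.
Variables (R : pzRingType) (W : lmodType R) (S : submod W).
Let S0 := sm0 S.
Let SD := @smD _ _ S.
Let SZ := @smZ _ _ S.

Lemma SN x : S x -> S (- x).
Proof. by move=> Sx; rewrite -scaleN1r; apply: SZ. Qed.
Lemma SB x y : S x -> S y -> S (x - y).
Proof. by move=> Sx Sy; apply: SD => //; apply: SN. Qed.

Definition cls (x : W) : W -> Prop := fun y => S (y - x).
Definition canon (x : W) : W := epsilon (inhabits 0) (cls x).

Lemma cls_eq x y : S (x - y) -> cls x = cls y.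
Proof.
move=> Sxy; apply: functional_extensionality => z; apply: propositional_extensionality.
rewrite /cls; split=> H.
- have -> : z - y = (z - x) + (x - y) by rewrite addrA subrK.
  by apply: SD.
- have -> : z - x = (z - y) - (x - y) by rewrite opprB addrA subrK.
  by apply: SB.
Qed.

Lemma canonP x : S (canon x - x).
Proof. rewrite /canon; apply: (epsilon_spec (inhabits 0) (cls x)); exists x; rewrite /cls subrr; exact: S0. Qed.

Lemma canon_eq x y : S (x - y) -> canon x = canon y.
Proof. by move=> H; rewrite /canon (cls_eq H). Qed.

Lemma canon_idem x : canon (canon x) = canon x.
Proof. apply: canon_eq; exact: canonP. Qed.

Definition quot := {x : W | canon x == x}.
HB.instance Definition _ := [isSub for (@sval W (fun x => canon x == x))].
HB.instance Definition _ := [Choice of quot by <:].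

Definition qpi (x : W) : quot := exist _ (canon x) (introT eqP (canon_idem x)).

Lemma qpiE x y : qpi x = qpi y <-> S (x - y).
Proof.
split=> [H|H]; last by apply: val_inj => /=; apply: canon_eq.
have /= E : canon x = canon y by rewrite -[canon x]/(val (qpi x)) H.
have h1 := canonP x; have h2 := canonP y.
have -> : x - y = (canon y - y) - (canon x - x).
  by rewrite E opprB addrC addrA (addrAC (canon y - y)) (addrAC (canon y)) subrr add0r addrC.
by apply: SB.
Qed.

Lemma qpi_val (q : quot) : qpi (val q) = q.
Proof. by apply: val_inj => /=; apply/eqP; case: q. Qed.

Lemma quotW (P : quot -> Prop) : (forall x, P (qpi x)) -> forall q, P q.
Proof. by move=> H q; rewrite -(qpi_val q). Qed.

Lemma S_canon x : S (val (qpi x) - x).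
Proof. exact: canonP. Qed.

Definition qzero := qpi 0.
Definition qadd (a b : quot) := qpi (val a + val b).
Definition qopp (a : quot) := qpi (- val a).
Definition qscale (c : R) (a : quot) := qpi (c *: val a).

Lemma qaddE x y : qadd (qpi x) (qpi y) = qpi (x + y).
Proof.
apply/qpiE; have h1 := S_canon x; have h2 := S_canon y.
have -> : val (qpi x) + val (qpi y) - (x + y) = (val (qpi x) - x) + (val (qpi y) - y).
  by rewrite opprD addrACA.
by apply: SD.
Qed.

Lemma qoppE x : qopp (qpi x) = qpi (- x).
Proof.
apply/qpiE; have h1 := S_canon x.
have -> : - val (qpi x) - - x = - (val (qpi x) - x) by rewrite opprB opprK addrC.
by apply: SN.
Qed.

Lemma qscaleE c x : qscale c (qpi x) = qpi (c *: x).
Proof.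
apply/qpiE; have h1 := S_canon x.
rewrite -scalerBr; by apply: SZ.
Qed.

Lemma qaddA : associative qadd.
Proof. by elim/quotW=> x; elim/quotW=> y; elim/quotW=> z; rewrite !qaddE addrA. Qed.
Lemma qaddC : commutative qadd.
Proof. by elim/quotW=> x; elim/quotW=> y; rewrite !qaddE addrC. Qed.
Lemma qadd0 : left_id qzero qadd.
Proof. by elim/quotW=> x; rewrite /qzero qaddE add0r. Qed.
Lemma qaddN : left_inverse qzero qopp qadd.
Proof. by elim/quotW=> x; rewrite qoppE qaddE addNr. Qed.

HB.instance Definition _ := GRing.isZmodule.Build quot qaddA qaddC qadd0 qaddN.
Lemma qpiD x y : qpi (x + y) = qpi x + qpi y.
Proof. by rewrite -qaddE. Qed.

Lemma qscaleA a b v : qscale a (qscale b v) = qscale (a * b) v.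
Proof. by elim/quotW: v => x; rewrite !qscaleE scalerA. Qed.
Lemma qscale1 : left_id 1 qscale.
Proof. by elim/quotW=> x; rewrite qscaleE scale1r. Qed.
Lemma qscaleDr : right_distributive qscale +%R.
Proof. by move=> a; elim/quotW=> x; elim/quotW=> y; rewrite -qpiD !qscaleE scalerDr qpiD. Qed.
Lemma qscaleDl v : {morph qscale^~ v: a b / a + b}.
Proof. by elim/quotW: v => x a b; rewrite !qscaleE scalerDl qpiD. Qed.

HB.instance Definition _ := GRing.Zmodule_isLmodule.Build R quot qscaleA qscale1 qscaleDr qscaleDl.

Lemma qpiZ c x : qpi (c *: x) = c *: qpi x.
Proof. by rewrite -qscaleE. Qed.
Lemma qpi0 : qpi 0 = 0.
Proof. by []. Qed.
Lemma qpi_eq0 x : qpi x = 0 <-> S x.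
Proof. by rewrite -qpi0 qpiE subr0. Qed.

End Quot.


Definition mklin (R : pzRingType) (U V : lmodType R) (f : U -> V)
  (H : forall a x y, f (a *: x + y) = a *: f x + f y) : {linear U -> V} :=
  HB.pack f (GRing.isLinear.Build R U V *:%R f H).

Section FinGen.
Variable R : comNzRingType.

Lemma fin_gen_image (A B : lmodType R) (f : A -> B) :
  (forall a x y, f (a *: x + y) = a *: f x + f y) ->
  (forall z, exists y, f y = z) -> fin_gen A -> fin_gen B.
Proof.
move=> lin sur [k [e He]].
pose F := mklin lin.
exists k, (fun i => f (e i)) => z.
have [y <-] := sur z; have [c ->] := He y.
exists c; have -> : f = F by [].
by rewrite linear_sum; apply: eq_bigr => i _; rewrite linearZ.
Qed.

Lemma pair_big (A B : lmodType R) (I : Type) (r : seq I) (P : pred I) (F : I -> A) (G : I -> B) :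
  \sum_(i <- r | P i) ((F i, G i) : (A * B)%type) = (\sum_(i <- r | P i) F i, \sum_(i <- r | P i) G i).
Proof. by elim/big_rec3: _ => [|i x y z _ ->]. Qed.

Lemma split_lshift m n (i : 'I_m) : split (lshift n i) = inl i.
Proof. exact: (unsplitK (inl i)). Qed.
Lemma split_rshift m n (i : 'I_n) : split (rshift m i) = inr i.
Proof. exact: (unsplitK (inr i)). Qed.

Lemma fin_gen_prod (A B : lmodType R) : fin_gen A -> fin_gen B -> fin_gen (A * B)%type.
Proof.
move=> [k1 [e1 H1]] [k2 [e2 H2]].
exists (k1 + k2)%N, (fun i => match split i with inl j => (e1 j, 0) | inr j => (0, e2 j) end).
move=> [x y]; have [c1 ->] := H1 x; have [c2 ->] := H2 y.
exists (fun i => match split i with inl j => c1 j | inr j => c2 j end).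
rewrite big_split_ord /=.
rewrite (eq_bigr (fun i => (c1 i *: e1 i, 0))); last first.
  by move=> i _; rewrite split_lshift; congr (_, _); rewrite scaler0.
rewrite [X in _ + X](eq_bigr (fun i => (0, c2 i *: e2 i))); last first.
  by move=> i _; rewrite split_rshift; congr (_, _); rewrite scaler0.
rewrite !pair_big big1_eq [X in (_, _) + (X, _)]big1_eq.
by congr (_, _); rewrite /= ?addr0 ?add0r.
Qed.

Lemma fin_gen_ffun (A : lmodType R) (a : nat) : fin_gen A -> fin_gen {ffun 'I_a -> A}.
Proof.
move=> hA; elim: a => [|a IH].
  exists 0%N, (fun _ => 0) => f; exists (fun _ => 0); rewrite big_ord0.
  by apply/ffunP => -[].
pose phi (w : (A * {ffun 'I_a -> A})%type) : {ffun 'I_a.+1 -> A} :=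
  [ffun l => if unlift ord0 l is Some l' then w.2 l' else w.1].
apply: (@fin_gen_image _ _ phi); last exact: fin_gen_prod.
  move=> c [x f] [y g]; apply/ffunP => l; rewrite !ffunE /=.
  by case: (unlift ord0 l) => [l'|] //; rewrite !ffunE.
move=> g; exists (g ord0, [ffun l => g (lift ord0 l)]).
apply/ffunP => l; rewrite ffunE /=.
by case: unliftP => [l' ->|->]; rewrite ?ffunE.
Qed.

Lemma fin_gen_reg : fin_gen (R^o).
Proof.
exists 1%N, (fun _ => 1) => x; exists (fun _ => x).
by rewrite big_ord1; symmetry; exact: mulr1.
Qed.

Lemma fin_gen_quot (W : lmodType R) (S : submod W) : fin_gen W -> fin_gen (quot S).
Proof.
apply: fin_gen_image (@qpi _ _ S) _ _.
  by move=> c x y; rewrite qpiD qpiZ.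
by elim/quotW => x; exists x.
Qed.

Lemma fin_gen_zero (A : lmodType R) : (forall x : A, x = 0) -> fin_gen A.
Proof. move=> h; exists 0%N, (fun _ => 0) => x; exists (fun _ => 0); rewrite big_ord0; exact: h. Qed.
End FinGen.

Section Tri.
Variables (R : comNzRingType) (C : lmodType R -> Prop) (hC : triangulated_subcat C).

Lemma C_fg M : C M -> fin_gen M.
Proof. by case: hC => h _ _ _; apply: h. Qed.

Lemma C_mid (A B D : lmodType R) (f : {linear A -> B}) (g : {linear B -> D}) :
  fin_gen A -> fin_gen B -> fin_gen D -> short_exact f g -> C A -> C D -> C B.
Proof. by case: hC => _ _ _ h fa fb fd se; case: (h A B D f g fa fb fd se). Qed.

Lemma C_right (A B D : lmodType R) (f : {linear A -> B}) (g : {linear B -> D}) :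
  fin_gen A -> fin_gen B -> fin_gen D -> short_exact f g -> C A -> C B -> C D.
Proof. by case: hC => _ _ _ h fa fb fd se; case: (h A B D f g fa fb fd se). Qed.

Lemma C_zero (A : lmodType R) : (forall x : A, x = 0) -> C A.
Proof.
move=> hA; case: (hC) => _ [Z [CZ hZ]] _ _.
have lid : forall a (x y : Z), id (a *: x + y) = a *: id x + id y by [].
have l0 : forall a (x y : Z), (fun _ => (0 : A)) (a *: x + y) = a *: (fun _ => 0) x + (fun _ => 0) y.
  by move=> *; rewrite scaler0 addr0.
apply: (C_right (f := mklin lid) (g := mklin l0)) => //.
- exact: fin_gen_zero.
- exact: fin_gen_zero.
- exact: fin_gen_zero.
- split.
  + by move=> x y _; rewrite (hZ x) (hZ y).
  + by move=> z; exists 0; rewrite (hA z).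
  + by move=> y; split => [_|_]; [exists y|].
Qed.
End Tri.
Section Tors.
Variables (R : idomainType) (hR : is_PID R) (p : R) (hp : prime_elt p).
Variables (M : lmodType R) (n : nat) (e : 'I_n -> M).
Hypothesis Hspan : forall x, torsion_part M p x -> exists c, x = \sum_(i < n) c i *: e i.
Hypothesis Hrel : forall c : 'I_n -> R, \sum_(i < n) c i *: e i = 0 <-> forall i, rdvd p (c i).

Local Notation T := (torsion_part M p).

Lemma T_p x : T x -> p *: x = 0.
Proof.
move=> /Hspan [c ->]; rewrite scaler_sumr.
rewrite (eq_bigr (fun i => (p * c i) *: e i)); last by move=> i _; rewrite scalerA.
by apply/Hrel => i; exists (c i); rewrite mulrC.
Qed.

Lemma T0 : T 0. Proof. by exists 0%N; rewrite scaler0. Qed.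
Lemma TL a x y : T x -> T y -> T (a *: x + y).
Proof.
move=> /T_p hx /T_p hy; exists 1%N.
by rewrite expr1 scalerDr scalerA mulrC -scalerA hx hy scaler0 addr0.
Qed.
Lemma TD x y : T x -> T y -> T (x + y).
Proof. by move=> hx hy; rewrite -[x]scale1r; apply: TL. Qed.
Lemma TZ a x : T x -> T (a *: x).
Proof. by move=> hx; rewrite -[_ *: _]addr0; apply: TL => //; exact: T0. Qed.
Lemma TN x : T x -> T (- x).
Proof. by move=> hx; rewrite -scaleN1r; apply: TZ. Qed.
Lemma TB x y : T x -> T y -> T (x - y).
Proof. by move=> hx hy; apply: TD => //; apply: TN. Qed.
Lemma Te i : T (e i).
Proof.
exists 1%N; rewrite expr1.
have := (Hrel (fun j => if j == i then p else 0)).2.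
rewrite (bigD1 i) //= eqxx big1 ?addr0; first by apply => j; case: eqP => _; [exact: rdvd_refl|exact: rdvd0].
by move=> j /negbTE ->; rewrite scale0r.
Qed.
Lemma Tsum (c : 'I_n -> R) : T (\sum_(i < n) c i *: e i).
Proof.
elim/big_rec: _ => [|i x _ hx]; first exact: T0.
by apply: TL => //; apply: Te.
Qed.
Lemma T_pv v : T (p *: v) -> p *: v = 0.
Proof. by move=> [k hk]; apply: T_p; exists k.+1; rewrite exprSr -scalerA. Qed.

Section Split0.
Variables (k : nat) (g : 'I_k -> M).
Hypothesis Hg : forall x, exists c : 'I_k -> R, x = \sum_(i < k) c i *: g i.

Definition Mj (j : nat) (x : M) : Prop :=
  exists t v (c : 'I_k -> R), T t /\ x = t + p *: v + \sum_(i < k | (i < j)%N) c i *: g i.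

Lemma Mj_L j a x y : Mj j x -> Mj j y -> Mj j (a *: x + y).
Proof.
move=> [t [v [c [Ht ->]]]] [t' [v' [c' [Ht' ->]]]].
exists (a *: t + t'), (a *: v + v'), (fun i => a * c i + c' i); split; first exact: TL.
have -> : \sum_(i < k | (i < j)%N) (a * c i + c' i) *: g i =
   a *: \sum_(i < k | (i < j)%N) c i *: g i + \sum_(i < k | (i < j)%N) c' i *: g i.
  by rewrite scaler_sumr -big_split; apply: eq_bigr => i _; rewrite scalerDl scalerA.
rewrite [p *: (_ + _)]scalerDr (scalerA p a) mulrC -scalerA.
rewrite !scalerDr.
by rewrite [in LHS]addrACA [X in X + _ = _]addrACA.
Qed.

Lemma Mj_T j t : T t -> Mj j t.
Proof.
move=> Ht; exists t, 0, (fun _ => 0); split => //.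
by rewrite scaler0 addr0 big1 ?addr0 // => i _; rewrite scale0r.
Qed.

Lemma Mj_p j v : Mj j (p *: v).
Proof.
exists 0, v, (fun _ => 0); split; first exact: T0.
by rewrite add0r big1 ?addr0 // => i _; rewrite scale0r.
Qed.

Lemma Mj_D j x y : Mj j x -> Mj j y -> Mj j (x + y).
Proof. by move=> hx hy; rewrite -[x]scale1r; apply: Mj_L. Qed.
Lemma Mj_Z j a x : Mj j x -> Mj j (a *: x).
Proof. by move=> hx; rewrite -[_ *: _]addr0; apply: Mj_L => //; rewrite -(scaler0 _ p); apply: Mj_p. Qed.

Lemma Mj_g j (i : 'I_k) : (i < j)%N -> Mj j (g i).
Proof.
move=> hij; exists 0, 0, (fun l => if l == i then 1 else 0); split; first exact: T0.
rewrite scaler0 !add0r (bigD1 i) //= eqxx scale1r big1 ?addr0 // => l /andP [_ /negbTE ->].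
by rewrite scale0r.
Qed.

Lemma Mj_step j (hj : (j < k)%N) x : Mj j.+1 x <-> exists m c, Mj j m /\ x = m + c *: g (Ordinal hj).
Proof.
split.
- move=> [t [v [c [Ht ->]]]].
  exists (t + p *: v + \sum_(i < k | (i < j)%N) c i *: g i), (c (Ordinal hj)); split.
    by exists t, v, c.
  rewrite (bigD1 (Ordinal hj)) //= -[RHS]addrA; congr (_ + _); rewrite addrC; congr (_ + _).
  by apply: eq_bigl => i; rewrite ltnS andbC -val_eqE /= -ltn_neqAle.
- move=> [m [c [hm ->]]]; apply: Mj_D.
    move: hm => [t [v [c' [Ht ->]]]]; exists t, v, (fun i : 'I_k => if (i < j)%N then c' i else 0); split => //.
    congr (_ + _); rewrite [RHS]big_mkcond [LHS]big_mkcond; apply: eq_bigr => i _ /=.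
    case: (ltnP i j) => hi; first by rewrite ltnS (ltnW hi).
    by case: ifP => // _; rewrite scale0r.
  by apply: Mj_Z; apply: Mj_g.
Qed.

Definition Qprop j (D : M -> M) :=
  [/\ (forall a x y, Mj j x -> Mj j y -> D (a *: x + y) = a *: D x + D y),
      (forall t, T t -> D t = t) & (forall v, D (p *: v) = 0)].

Lemma T_uniq t t' v v' : T t -> T t' -> t + p *: v = t' + p *: v' -> t = t'.
Proof.
move=> ht ht' E.
have h : T (p *: (v' - v)) by rewrite scalerBr -(sub_eqS E); exact: TB.
have h0 := T_pv h; rewrite scalerBr -(sub_eqS E) in h0.
by apply/eqP; rewrite -subr_eq0 h0.
Qed.

Lemma Mj0 x : Mj 0 x <-> exists t v, T t /\ x = t + p *: v.
Proof.
split.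
- by move=> [t [v [c [Ht ->]]]]; exists t, v; split => //; rewrite big_pred0 ?addr0.
- by move=> [t [v [Ht ->]]]; exists t, v, (fun _ => 0); split => //; rewrite big_pred0 ?addr0.
Qed.

Lemma Q0 : exists D, Qprop 0 D.
Proof.
pose P x t := T t /\ exists v, x = t + p *: v.
pose D x := epsilon (inhabits 0) (P x).
have DP x t v : T t -> x = t + p *: v -> D x = t.
  move=> Ht Ex.
  have [HD [v' Hv']] : P x (D x) by apply: epsilon_spec; exists t; split => //; exists v.
  by apply: (@T_uniq _ _ v' v) => //; rewrite -Hv' -Ex.
exists D; split.
- move=> a x y /Mj0 [t [v [Ht Ex]]] /Mj0 [t' [v' [Ht' Ey]]].
  rewrite (DP _ _ _ Ht Ex) (DP _ _ _ Ht' Ey).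
  apply: (DP _ _ (a *: v + v')); first exact: TL.
  rewrite Ex Ey !scalerDr (scalerA p a) mulrC -scalerA.
  by rewrite addrACA.
- by move=> t Ht; apply: (DP _ _ 0) => //; rewrite scaler0 addr0.
- by move=> v; apply: (DP _ _ v); [exact: T0|rewrite add0r].
Qed.

Lemma Mj_N j x : Mj j x -> Mj j (- x).
Proof. by move=> h; rewrite -scaleN1r; apply: Mj_Z. Qed.

Lemma Qstep j (hj : (j < k)%N) D : Qprop j D -> exists D', Qprop j.+1 D'.
Proof.
move=> [DL DT Dp].
set g0 := g (Ordinal hj).
have D0 : D 0 = 0 by rewrite -{1}(scaler0 _ p) Dp.
have DM m m' : Mj j m -> Mj j m' -> D (m + m') = D m + D m'.
  by move=> h1 h2; rewrite -[m]scale1r DL // !scale1r.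
case: (classic (Mj j g0)) => Hg0.
  exists D; split => //.
  move=> a x y /(Mj_step hj) [m [c [hm ->]]] /(Mj_step hj) [m' [c' [hm' ->]]].
  by apply: DL; apply: Mj_D => //; apply: Mj_Z.
have K m m' c c' : Mj j m -> Mj j m' -> m + c *: g0 = m' + c' *: g0 -> D m = D m'.
  move=> hm hm' E.
  have Ed : (c - c') *: g0 = m' - m.
    by rewrite scalerBl (sub_eqS (esym E)).
  have Hd : Mj j ((c - c') *: g0) by rewrite Ed; apply: Mj_D => //; apply: Mj_N.
  case: (classic (rdvd p (c - c'))) => [[h Hh]|nd].
    have -> : m' = m + p *: (h *: g0).
      by rewrite scalerA mulrC -Hh Ed addrC subrK.
    by rewrite DM ?Dp ?addr0 //; exact: Mj_p.
  exfalso; apply: Hg0.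
  have [a [b Hab]] := bezout_prime hR hp nd.
  have -> : g0 = a *: ((c - c') *: g0) + p *: (b *: g0).
    by rewrite !scalerA -scalerDl [p * b]mulrC Hab scale1r.
  apply: Mj_D; [exact: Mj_Z|exact: Mj_p].
pose P x m := Mj j m /\ exists c, x = m + c *: g0.
pose D' x := D (epsilon (inhabits 0) (P x)).
have DP x m c : Mj j m -> x = m + c *: g0 -> D' x = D m.
  move=> hm Ex.
  have [HD [c' Hc']] : P x (epsilon (inhabits 0) (P x)) by apply: epsilon_spec; exists m; split => //; exists c.
  by apply: (K _ _ c' c) => //; rewrite -Hc' -Ex.
exists D'; split.
- move=> a x y /(Mj_step hj) [m [c [hm Ex]]] /(Mj_step hj) [m' [c' [hm' Ey]]].
  rewrite (DP _ _ _ hm Ex) (DP _ _ _ hm' Ey) -DL //.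
  apply: (DP _ _ (a * c + c')); first exact: Mj_L.
  by rewrite Ex Ey scalerDr scalerA scalerDl addrACA.
- by move=> t Ht; rewrite (DP _ t 0) ?scale0r ?addr0 //; [exact: DT|exact: Mj_T].
- by move=> v; rewrite (DP _ (p *: v) 0) ?scale0r ?addr0 //; exact: Mj_p.
Qed.

Lemma Qall j : (j <= k)%N -> exists D, Qprop j D.
Proof.
elim: j => [|j IH] hj; first exact: Q0.
have [D HD] := IH (ltnW hj).
exact: (Qstep hj HD).
Qed.

Lemma splitting : exists pi : M -> M,
  [/\ (forall a x y, pi (a *: x + y) = a *: pi x + pi y),
      (forall t, T t -> pi t = t) & (forall x, T (pi x))].
Proof.
have [D [DL DT Dp]] := Qall (leqnn k).
have Mk x : Mj k x.
  have [c ->] := Hg x; exists 0, 0, c; split; first exact: T0.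
  by rewrite scaler0 !add0r; apply: eq_bigl => i; rewrite ltn_ord.
have D0 : D 0 = 0 by rewrite -{1}(scaler0 _ p) Dp.
exists D; split => //.
- by move=> a x y; apply: DL.
- move=> x; exists 1%N; rewrite expr1.
  by have := DL p x 0 (Mk x) (Mk 0); rewrite addr0 Dp D0 addr0 => <-.
Qed.

End Split0.


Section Construction.
Variable kap : M -> 'I_n -> R.
Hypothesis K1 : forall a x y i, rdvd p (kap (a *: x + y) i - (a * kap x i + kap y i)).
Hypothesis K2 : forall (c : 'I_n -> R) i, rdvd p (kap (\sum_(j < n) c j *: e j) i - c i).
Hypothesis K3 : forall x, T x -> x = \sum_(i < n) kap x i *: e i.
Variable m : nat.

Definition W a := ({ffun 'I_a -> M} * {ffun 'I_m -> R^o})%type.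
Definition Spred a (u : 'I_m -> nat) (w : W a) :=
  (forall l, T (w.1 l)) /\ (forall k, rdvd (p ^+ u k) (w.2 k)).

Lemma Spred0 a u : Spred u (0 : W a).
Proof. by split => [l|k]; rewrite ffunE; [exact: T0|exact: rdvd0]. Qed.
Lemma SpredD a u (x y : W a) : Spred u x -> Spred u y -> Spred u (x + y).
Proof.
move=> [h1 h2] [h3 h4]; split => [l|k]; rewrite ffunE; [exact: TD|exact: rdvdD].
Qed.
Lemma SpredZ a u c (x : W a) : Spred u x -> Spred u (c *: x).
Proof.
move=> [h1 h2]; split => [l|k]; rewrite ffunE; [exact: TZ|exact: rdvdMl].
Qed.

Definition Ssub a u : submod (W a) := Submod (@Spred0 a u) (@SpredD a u) (@SpredZ a u).
Definition V a u : lmodType R := quot (Ssub a u).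

Lemma S_V a u (w : W a) : Spred u w <-> (qpi (Ssub a u) w = 0).
Proof. by rewrite qpi_eq0. Qed.

Section Gstep.
Variables (a : nat) (v : 'I_m -> nat) (I : {set 'I_m}) (HI : #|I| = n).
Definition v' (k : 'I_m) : nat := (v k + (k \in I))%N.
Definition sig (i : 'I_n) : 'I_m := enum_val (cast_ord (esym HI) i).
Lemma sig_inj : injective sig.
Proof. by move=> i j /enum_val_inj /cast_ord_inj. Qed.
Lemma sigI i : sig i \in I.
Proof. exact: enum_valP. Qed.
Lemma sig_onto k : k \in I -> exists i, sig i = k.
Proof.
move=> kI; exists (cast_ord HI (enum_rank_in kI k)).
by rewrite /sig cast_ordK enum_rankK_in.
Qed.

Definition iota0 (x : M) : W a.+1 :=
  ([ffun l => if l == ord0 then x else 0],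
   [ffun k => \sum_(i < n) (if sig i == k then p ^+ v k * kap x i else 0)]).

Lemma sum_sig_in (F : 'I_n -> R) i0 :
  \sum_(i < n) (if sig i == sig i0 then F i else 0) = F i0.
Proof.
rewrite (bigD1 i0) //= eqxx big1 ?addr0 // => i /negbTE hi.
by rewrite (inj_eq sig_inj) hi.
Qed.

Lemma sum_sig_out (F : 'I_n -> R) k : k \notin I ->
  \sum_(i < n) (if sig i == k then F i else 0) = 0.
Proof.
move=> kI; rewrite big1 // => i _; case: eqP => // E.
by move: kI; rewrite -E sigI.
Qed.

Lemma rdvd_sig_term (k : 'I_m) i (X : R) : rdvd p X ->
  rdvd (p ^+ v' k) (if sig i == k then p ^+ v k * X else 0).
Proof.
move=> [h ->]; case: eqP => [E|_]; last exact: rdvd0.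
rewrite /v' -E sigI addn1 exprSr; exists h; ring.
Qed.

Lemma rdvd_sig_term' (k : 'I_m) i (X : R) :
  rdvd (p ^+ v k) (if sig i == k then p ^+ v k * X else 0).
Proof. by case: eqP => _; [exists X; rewrite mulrC|exact: rdvd0]. Qed.

Lemma iota_lin a0 x y : qpi (Ssub a.+1 v') (iota0 (a0 *: x + y)) =
   a0 *: qpi (Ssub a.+1 v') (iota0 x) + qpi (Ssub a.+1 v') (iota0 y).
Proof.
rewrite -qpiZ -qpiD; apply/qpiE; split => [l|k]; rewrite /= !ffunE.
- by case: eqP => _; rewrite ?scaler0 ?addr0 subrr; exact: T0.
- rewrite /GRing.scale /= mulr_sumr -big_split -sumrB /=; apply: rdvd_sum => i _.
  have -> : (if sig i == k then p ^+ v k * kap (a0 *: x + y) i else 0) -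
     (a0 * (if sig i == k then p ^+ v k * kap x i else 0) + (if sig i == k then p ^+ v k * kap y i else 0))
     = if sig i == k then p ^+ v k * (kap (a0 *: x + y) i - (a0 * kap x i + kap y i)) else 0.
    by case: eqP => _; [ring|rewrite mulr0 !addr0 subr0].
  exact: rdvd_sig_term.
Qed.

Definition iota := mklin iota_lin.

Definition rho0 (w : W a.+1) : W a := ([ffun l => w.1 (lift ord0 l)], w.2).

Lemma rho0_lin c (w w' : W a.+1) : rho0 (c *: w + w') = c *: rho0 w + rho0 w'.
Proof. by congr (_, _); apply/ffunP => l; rewrite !ffunE. Qed.

Lemma rho0_S w : Spred v' w -> Spred v (rho0 w).
Proof.
move=> [h1 h2]; split => [l|k]; rewrite /= ?ffunE //.
by apply: rdvd_trans (h2 k); apply: rdvd_exp; rewrite /v' leq_addr.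
Qed.

Definition rho (q : V a.+1 v') : V a v := qpi (Ssub a v) (rho0 (val q)).

Lemma rho_pi w : rho (qpi (Ssub a.+1 v') w) = qpi (Ssub a v) (rho0 w).
Proof.
apply/qpiE.
have -> : rho0 (val (qpi (Ssub a.+1 v') w)) - rho0 w = rho0 (val (qpi (Ssub a.+1 v') w) - w).
  by rewrite [in RHS]addrC -[in RHS]scaleN1r rho0_lin scaleN1r addrC.
by apply: rho0_S; apply: (S_canon (Ssub a.+1 v')).
Qed.

Lemma rho_lin c x y : rho (c *: x + y) = c *: rho x + rho y.
Proof.
elim/quotW: x => x; elim/quotW: y => y.
by rewrite -qpiZ -qpiD !rho_pi rho0_lin qpiD qpiZ.
Qed.

Definition rhoL := mklin rho_lin.

Lemma kap_comb (x : M) (c : 'I_n -> R) i :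
  rdvd p (kap (x + \sum_(j < n) c j *: e j) i - (kap x i + c i)).
Proof.
have h1 := K1 1 x (\sum_(j < n) c j *: e j) i.
have h2 := K2 c i.
rewrite scale1r mul1r in h1.
have -> : kap (x + \sum_(j < n) c j *: e j) i - (kap x i + c i) =
  (kap (x + \sum_(j < n) c j *: e j) i - (kap x i + kap (\sum_(j < n) c j *: e j) i)) +
  (kap (\sum_(j < n) c j *: e j) i - c i) by ring.
exact: rdvdD.
Qed.

Lemma G_exact : short_exact iota rhoL.
Proof.
split.
- move=> x y E.
  have : iota (x - y) = 0 by rewrite linearB E subrr.
  rewrite /= -(qpi0 (Ssub a.+1 v')) => /qpiE; rewrite subr0 => -[h1 h2].
  have Tz : T (x - y) by have := h1 ord0; rewrite ffunE eqxx.
  apply/eqP; rewrite -subr_eq0; apply/eqP; rewrite (K3 Tz); apply/Hrel => i.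
  have := h2 (sig i); rewrite ffunE sum_sig_in /v' sigI addn1 exprSr.
  by apply: rdvd_pcancel; apply: expf_neq0; case: hp.
- elim/quotW => w.
  exists (qpi (Ssub a.+1 v') ([ffun l => if unlift ord0 l is Some l' then w.1 l' else 0], w.2)).
  rewrite /= rho_pi; congr qpi; case: w => w1 w2; congr (_, _).
  by apply/ffunP => l; rewrite !ffunE liftK.
- elim/quotW => w; split.
  + rewrite /= rho_pi => /qpiE; rewrite subr0 => -[h1 h2].
    pose d k := epsilon (inhabits 0) (fun d => w.2 k = d * p ^+ v k).
    have Hd k : w.2 k = d k * p ^+ v k.
      by apply: (epsilon_spec (inhabits 0) (fun d => w.2 k = d * p ^+ v k)); apply: h2.
    exists (w.1 ord0 + \sum_(i < n) (d (sig i) - kap (w.1 ord0) i) *: e i).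
    apply/qpiE; split => [l|k]; rewrite /= !ffunE.
    * case: (unliftP ord0 l) => [l' ->|->]; rewrite ?eqxx.
        rewrite eq_sym (negbTE (neq_lift _ _)) sub0r; apply: TN.
        by have := h1 l'; rewrite ffunE.
      by rewrite addrC addKr; apply: Tsum.
    * case: (boolP (k \in I)) => kI.
        have [i0 <-] := sig_onto kI.
        rewrite sum_sig_in Hd.
        have := kap_comb (w.1 ord0) (fun i => d (sig i) - kap (w.1 ord0) i) i0.
        move=> [h Hh]; rewrite /v' sigI addn1 exprSr; exists h.
        have -> : kap (w.1 ord0 + \sum_(j < n) (d (sig j) - kap (w.1 ord0) j) *: e j) i0
           = h * p + d (sig i0) by move/eqP: Hh; rewrite subr_eq => /eqP ->; ring.
        ring.
      rewrite sum_sig_out // sub0r /v' (negbTE kI) addn0; apply: rdvdN.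
      by rewrite Hd; exact: rdvd_mull.
  + move=> [x <-]; rewrite /= rho_pi; apply/qpiE; rewrite subr0.
    split => [l|k]; rewrite /= !ffunE.
    * by rewrite eq_sym (negbTE (neq_lift _ _)); exact: T0.
    * by apply: rdvd_sum => i _; exact: rdvd_sig_term'.
Qed.

Lemma G_up (C : lmodType R -> Prop) : triangulated_subcat C -> C M -> C (V a v) -> C (V a.+1 v').
Proof.
move=> hC hM hV; have fM := C_fg hC hM.
apply: (C_mid hC _ _ _ G_exact) => //; apply: fin_gen_quot; apply: fin_gen_prod;
  by [apply: fin_gen_ffun|apply: fin_gen_ffun; apply: fin_gen_reg].
Qed.

Lemma G_down (C : lmodType R -> Prop) : triangulated_subcat C -> C M -> C (V a.+1 v') -> C (V a v).
Proof.
move=> hC hM hV; have fM := C_fg hC hM.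
apply: (C_right hC _ _ _ G_exact) => //; apply: fin_gen_quot; apply: fin_gen_prod;
  by [apply: fin_gen_ffun|apply: fin_gen_ffun; apply: fin_gen_reg].
Qed.

End Gstep.

Section Paths.
Variables (C : lmodType R -> Prop) (hC : triangulated_subcat C) (hM : C M).
Hypothesis hnm : (n < m)%N.

Lemma C_V0 : C (V 0 (fun _ => 0%N)).
Proof.
apply: C_zero => //; elim/quotW => w; apply/qpi_eq0; split => [[]//|k].
by rewrite expr0; exists (w.2 k); rewrite mulr1.
Qed.

Lemma C_Vind (I : {set 'I_m}) : #|I| = n -> C (V 1 (fun k => nat_of_bool (k \in I))).
Proof.
move=> HI; have := G_up (v := fun _ => 0%N) HI hC hM C_V0.
by congr (C (V 1 _)).
Qed.

Lemma sub_card (T0 : finType) (A : {set T0}) k : (k <= #|A|)%N -> exists S : {set T0}, S \subset A /\ #|S| = k.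
Proof.
elim: k => [|k IH] hk; first by exists set0; rewrite sub0set cards0.
have [S [SA cS]] := IH (ltnW hk).
have : (0 < #|A :\: S|)%N by rewrite cardsDS // cS subn_gt0.
case/card_gt0P => x; rewrite inE => /andP [xS xA].
exists (x |: S); split; first by rewrite subUset sub1set xA.
by rewrite cardsU1 xS cS.
Qed.

Lemma transfer (w : 'I_m -> nat) (i j : 'I_m) : (0 < n)%N -> i != j -> (0 < w j)%N -> C (V 1 w) ->
  C (V 1 (fun k => if k == i then (w k).+1 else if k == j then (w k).-1 else w k)).
Proof.
move=> n0 ij wj hw.
have [S [SA cS]] : exists S : {set 'I_m}, S \subset ~: [set i; j] /\ #|S| = n.-1.
  apply: sub_card; have H := cardsC [set i; j]; rewrite cards2 ij card_ord in H.
  rewrite -(leq_add2l 2) H; move: hnm; lia.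
have iS : i \notin S by apply/negP => /(subsetP SA); rewrite !inE eqxx.
have jS : j \notin S by apply/negP => /(subsetP SA); rewrite !inE eqxx orbT.
have HI : #|i |: S| = n by rewrite cardsU1 iS cS; lia.
have HI' : #|j |: S| = n by rewrite cardsU1 jS cS; lia.
have h2 := G_up (v := w) HI hC hM hw.
apply: (G_down (v := fun k => if k == i then (w k).+1 else if k == j then (w k).-1 else w k) HI' hC hM).
suff -> : v' (fun k => if k == i then (w k).+1 else if k == j then (w k).-1 else w k) (j |: S) = v' w (i |: S) by [].
apply: functional_extensionality => k; rewrite /v' !inE.
case: (eqVneq k i) => [->|ki]; first by rewrite (negbTE ij) (negbTE iS) /=; lia.
case: (eqVneq k j) => [->|kj] /=; first by rewrite (negbTE jS); lia.
by [].
Qed.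

Lemma sum2 (f : 'I_m -> nat) k1 k2 : k1 != k2 ->
  (\sum_k f k = f k1 + f k2 + \sum_(k | (k != k1) && (k != k2)) f k)%N.
Proof.
move=> k12; rewrite (bigD1 k1) //= (bigD1 k2) /=; last by rewrite eq_sym.
by rewrite addnA; congr (_ + _)%N; apply: eq_bigl => k; rewrite andbC.
Qed.

Lemma C_le1 (w : 'I_m -> nat) : (forall k, w k <= 1)%N -> (\sum_k w k)%N = n -> C (V 1 w).
Proof.
move=> h1 hs.
set I := [set k | w k == 1%N].
have E : w = fun k => nat_of_bool (k \in I).
  apply: functional_extensionality => k; rewrite inE.
  by move: (h1 k); case: (w k) => [|[|]].
rewrite E; apply: C_Vind; rewrite -hs E -sum1_card big_mkcond /=.
by apply: eq_bigr => k _; case: (_ \in _).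
Qed.

Lemma C_step (w : 'I_m -> nat) k1 : (1 < w k1)%N -> (\sum_k w k)%N = n ->
  exists w0 : 'I_m -> nat, [/\ (\sum_k w0 k)%N = n, (\sum_k (w0 k).-1 < \sum_k (w k).-1)%N
     & C (V 1 w0) -> C (V 1 w)].
Proof.
move=> hk1 hs.
have [k2 hk2] : exists k2, w k2 = 0%N.
  case: (boolP [exists k, w k == 0%N]) => [/existsP [k /eqP]|/existsP nk]; first by exists k.
  have : (\sum_(k < m) 1 <= \sum_k w k)%N.
    apply: leq_sum => k _.
    by rewrite lt0n; apply/negP => h; apply: nk; exists k.
  by rewrite sum_nat_const card_ord muln1 hs; move: hnm; lia.
have k12 : k1 != k2 by apply/eqP => E; move: hk1; rewrite E hk2.
pose w0 k := if k == k1 then (w k).-1 else if k == k2 then 1%N else w k.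
have rest : (\sum_(k | (k != k1) && (k != k2)) w0 k = \sum_(k | (k != k1) && (k != k2)) w k)%N.
  by apply: eq_bigr => k /andP [/negbTE h1 /negbTE h2]; rewrite /w0 h1 h2.
have rest' : (\sum_(k | (k != k1) && (k != k2)) (w0 k).-1 = \sum_(k | (k != k1) && (k != k2)) (w k).-1)%N.
  by apply: eq_bigr => k /andP [/negbTE h1 /negbTE h2]; rewrite /w0 h1 h2.
have e1 : w0 k1 = (w k1).-1 by rewrite /w0 eqxx.
have e2 : w0 k2 = 1%N by rewrite /w0 eq_sym (negbTE k12) eqxx.
exists w0; split.
- by rewrite (sum2 _ k12) rest e1 e2 -hs (sum2 _ k12) hk2; lia.
- by rewrite (sum2 _ k12) rest' e1 e2 (sum2 (fun k => (w k).-1) k12) hk2; lia.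
- have n0 : (0 < n)%N by rewrite -hs (sum2 _ k12); lia.
  move=> h0; have := transfer n0 k12 (_ : 0 < w0 k2)%N h0; rewrite e2 => /(_ isT).
  congr (C (V 1 _)); apply: functional_extensionality => k.
  case: (eqVneq k k1) => [->|kk1]; first by rewrite e1; lia.
  case: (eqVneq k k2) => [->|kk2]; first by rewrite e2 hk2.
  by rewrite /w0 (negbTE kk1) (negbTE kk2).
Qed.

Lemma C_all d : forall w : 'I_m -> nat,
  (\sum_k (w k).-1 <= d)%N -> (\sum_k w k)%N = n -> C (V 1 w).
Proof.
elim: d => [|d IH] w hd hs; (case: (boolP [exists k, 1 < w k]%N) => [/existsP [k1 hk1]|/existsP nk]).
- by have [w0 [_ lt _]] := C_step hk1 hs; move: hd lt; lia.
- by apply: C_le1 => // k; rewrite leqNgt; apply/negP => h; apply: nk; exists k.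
- have [w0 [s0 lt imp]] := C_step hk1 hs; apply: imp; apply: IH => //; move: hd lt; lia.
- by apply: C_le1 => // k; rewrite leqNgt; apply/negP => h; apply: nk; exists k.
Qed.

End Paths.


Lemma fst_sum a (I0 : Type) (r0 : seq I0) (P : pred I0) (F : I0 -> W a) :
  (\sum_(i <- r0 | P i) F i).1 = \sum_(i <- r0 | P i) (F i).1.
Proof. by elim/big_rec2: _ => // i x y _ <-. Qed.
Lemma snd_sum a (I0 : Type) (r0 : seq I0) (P : pred I0) (F : I0 -> W a) :
  (\sum_(i <- r0 | P i) F i).2 = \sum_(i <- r0 | P i) (F i).2.
Proof. by elim/big_rec2: _ => // i x y _ <-. Qed.

Lemma qpi_sum a u (I0 : Type) (r0 : seq I0) (P : pred I0) (F : I0 -> W a) :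
  qpi (Ssub a u) (\sum_(i <- r0 | P i) F i) = \sum_(i <- r0 | P i) qpi (Ssub a u) (F i).
Proof.
elim/big_rec2: _ => [|i x y _ <-]; first exact: qpi0.
by rewrite qpiD.
Qed.

Section PPart.
Variables (u : 'I_m -> nat) (rs : seq nat).
Hypothesis hsz : (size rs <= m)%N.
Hypothesis hu : forall k : 'I_m, u k = nth 0%N rs k.
Let s := [seq p ^+ ri | ri <- rs].
Let hss : size s = size rs. Proof. by rewrite size_map. Qed.
Let kk (i : 'I_(size s)) : 'I_m := widen_ord (leq_trans (eq_leq hss) hsz) i.

Definition delta (i : 'I_(size s)) : W 1 := (0, [ffun k : 'I_m => if (k : nat) == (i : nat) then 1 else 0]).

Lemma sum_delta (c : 'I_(size s) -> R) (k : 'I_m) :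
  \sum_(i < size s) c i * (if (k : nat) == (i : nat) then 1 else 0) =
  if (k < size s)%N =P true is ReflectT hk then c (Ordinal hk) else 0.
Proof.
case: eqP => [hk|hk].
  rewrite (bigD1 (Ordinal hk)) //= eqxx mulr1 big1 ?addr0 // => i /eqP ne.
  case: eqP => [E|_]; last by rewrite mulr0.
  by exfalso; apply: ne; apply: val_inj => /=; rewrite E.
rewrite big1 // => i _; case: eqP => [E|_]; last by rewrite mulr0.
by exfalso; apply: hk; rewrite E ltn_ord.
Qed.

Lemma p_part : iso_cyclic_sum (torsion_part (V 1 u) p) s.
Proof.
exists (fun i => qpi (Ssub 1 u) (delta i)); split.
- move=> i; exists (nth 0%N rs i); rewrite -qpiZ; apply/qpi_eq0; split => [l|k] /=; rewrite !ffunE.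
    by rewrite scaler0; exact: T0.
  case: eqP => [E|_]; last by rewrite /GRing.scale /= mulr0; exact: rdvd0.
  by rewrite hu E; exists 1; rewrite /GRing.scale /= mulr1 mul1r.
- elim/quotW => w [N hN].
  rewrite -qpiZ in hN; move/qpi_eq0: hN => [h1 h2].
  have T1 : T (w.1 ord0).
    move: (h1 ord0); rewrite ffunE => -[j hj]; exists (j + N)%N.
    by rewrite exprD -scalerA.
  exists (fun i => w.2 (kk i)).
  rewrite (eq_bigr (fun i => qpi (Ssub 1 u) (w.2 (kk i) *: delta i))); last by move=> i _; rewrite qpiZ.
  rewrite -qpi_sum; apply/qpiE; split => [l|k]; rewrite /= ?ffunE.
  + rewrite fst_sum sum_ffunE big1 ?subr0; first by rewrite (ord1 l).
    by move=> i _; rewrite /= !ffunE scaler0.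
  + rewrite snd_sum sum_ffunE.
    rewrite (eq_bigr (fun i => w.2 (kk i) * (if (k : nat) == (i : nat) then 1 else 0))); last first.
      by move=> i _; rewrite !ffunE.
    rewrite sum_delta; case: eqP => [hk|hk].
      have -> : kk (Ordinal hk) = k by apply: val_inj.
      by rewrite subrr; exact: rdvd0.
    rewrite hu nth_default ?expr0; first by exists (w.2 k - 0); rewrite mulr1.
    by rewrite leqNgt -hss; apply/negP => h; apply: hk.
- move=> c.
  rewrite (eq_bigr (fun i => qpi (Ssub 1 u) (c i *: delta i))); last by move=> i _; rewrite qpiZ.
  rewrite -qpi_sum qpi_eq0; split.
  + move=> [_ h2] i; have := h2 (kk i).
    rewrite snd_sum sum_ffunE.
    rewrite (eq_bigr (fun j => c j * (if (kk i : nat) == (j : nat) then 1 else 0))); last first.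
      by move=> j _; rewrite !ffunE.
    rewrite sum_delta; case: eqP => [hk|hk]; last by exfalso; apply: hk; exact: (ltn_ord i).
    have -> : Ordinal hk = i by apply: val_inj.
    by rewrite hu (nth_map 0%N) // -hss.
  + move=> hc; split => [l|k]; rewrite /= ?ffunE.
      rewrite fst_sum sum_ffunE big1; first exact: T0.
      by move=> i _; rewrite /= !ffunE scaler0.
    rewrite snd_sum sum_ffunE.
    rewrite (eq_bigr (fun j => c j * (if (k : nat) == (j : nat) then 1 else 0))); last first.
      by move=> j _; rewrite !ffunE.
    rewrite sum_delta; case: eqP => [hk|hk]; last exact: rdvd0.
    by have := hc (Ordinal hk); rewrite (nth_map 0%N) -?hss // hu.
Qed.
End PPart.


Lemma q_part (u : 'I_m -> nat) (q : R) : prime_elt q -> ~ associated p q ->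
  iso_sub (torsion_part M q) (torsion_part (V 1 u) q).
Proof.
move=> hq nass.
pose f (x : M) : V 1 u := qpi (Ssub 1 u) ([ffun _ => x], 0).
have flin a x y : f (a *: x + y) = a *: f x + f y.
  rewrite -qpiZ -qpiD; congr qpi; congr (_, _); rewrite /=.
    by apply/ffunP => l; rewrite !ffunE.
  by rewrite scaler0 addr0.
pose F := mklin flin.
have FE x : F x = f x by [].
have kill (z : M) j k : p ^+ j *: z = 0 -> q ^+ k *: z = 0 -> z = 0.
  move=> h1 h2; have [al [be Hab]] := bezout_pows hR j k hp hq nass.
  by rewrite -[z]scale1r -Hab scalerDl -!scalerA h1 h2 !scaler0 addr0.
exists f; split.
- by move=> a x y _ _; apply: flin.
- by move=> x [k hk]; exists k; rewrite -!FE -linearZ hk linear0.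
- move=> x y [k1 hk1] [k2 hk2] E.
  have : F (x - y) = 0 by rewrite linearB !FE E subrr.
  rewrite FE => /qpi_eq0 [h1 _].
  have := h1 ord0; rewrite ffunE => -[j hj].
  apply/eqP; rewrite -subr_eq0; apply/eqP; apply: (kill _ j (k1 + k2)%N) => //.
  by rewrite scalerBr exprD -!scalerA hk2 scaler0 subr0 scalerA mulrC -scalerA hk1 scaler0.
- elim/quotW => w [k hk].
  rewrite -qpiZ in hk; move/qpi_eq0: hk => [h1 h2].
  have := h1 ord0; rewrite ffunE => -[j hj].
  have [al [be Hab]] := bezout_pows hR j k hp hq nass.
  exists ((al * p ^+ j) *: w.1 ord0).
    exists k; rewrite scalerA.
    have -> : q ^+ k * (al * p ^+ j) = al * (p ^+ j * q ^+ k) by ring.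
    by rewrite -!scalerA hj scaler0.
  apply/qpiE; split => [l|k']; rewrite /= !ffunE.
  + rewrite (ord1 l).
    have -> : (al * p ^+ j) *: w.1 ord0 - w.1 ord0 = (- be) *: (q ^+ k *: w.1 ord0).
      rewrite scalerA -[X in _ - X]scale1r -scalerBl; congr (_ *: _).
      by rewrite -Hab; ring.
    by apply: TZ; have := h1 ord0; rewrite ffunE.
  + rewrite sub0r; apply: rdvdN.
    have [al' [be' Hab']] := bezout_pows hR (u k') k hp hq nass.
    have -> : w.2 k' = al' * p ^+ u k' * w.2 k' + be' * (q ^+ k * w.2 k').
      by rewrite mulrA -mulrDl Hab' mul1r.
    apply: rdvdD; first by apply: rdvdMr; exact: rdvd_mull.
    by apply: rdvdMl; have := h2 k'; rewrite ffunE.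
Qed.

End Construction.
End Tors.

Lemma sum_nth_seq (s : seq nat) (m : nat) : (size s <= m)%N ->
  (\sum_(k < m) nth 0%N s k)%N = sumn s.
Proof.
elim: s m => [|x s IH] m hs.
  by rewrite big1 // => k _; rewrite nth_nil.
case: m hs => [|m] //= hs.
by rewrite big_ord_recl /= IH.
Qed.

Unset Implicit Arguments.

Theorem mainTheorem2 (R : idomainType) (hR : is_PID R)
    (C : lmodType R -> Prop) (hC : triangulated_subcat C)
    (p : R) (hp : prime_elt p)
    (M : lmodType R) (hM : C M) (r : nat)
    (hMp : iso_cyclic_sum (torsion_part M p) (nseq r p))
    (rs : seq nat) (hrs : sumn rs = r) :
  exists N : lmodType R,
    [/\ C N,
        iso_cyclic_sum (torsion_part N p) [seq p ^+ ri | ri <- rs]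
      & forall q : R, prime_elt q -> ~ associated p q ->
          iso_sub (torsion_part M q) (torsion_part N q)].
Proof.
case: hMp => e [He1 He2 He3].
set n := size (nseq r p) in e He1 He2 He3.
have Hrel : forall c : 'I_n -> R, \sum_(i < n) c i *: e i = 0 <-> forall i, rdvd p (c i).
  have hi (i : 'I_n) : (i < r)%N by rewrite -(size_nseq r p); exact: ltn_ord.
  by move=> c; rewrite He3; split => h i; have := h i; rewrite nth_nseq hi.
have [k [g Hg]] := C_fg hC hM.
have [pi [piL piT piTt]] := splitting hR hp He2 Hrel Hg.
pose kap x := epsilon (inhabits (fun _ : 'I_n => 0)) (fun c => pi x = \sum_(i < n) c i *: e i).
have kapP x : pi x = \sum_(i < n) kap x i *: e i.
  apply: (epsilon_spec (inhabits (fun _ : 'I_n => 0)) (fun c => pi x = \sum_(i < n) c i *: e i)).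
  exact: He2.
have comb (A B D : 'I_n -> R) a :
    \sum_(i < n) (A i - (a * B i + D i)) *: e i =
    \sum_(i < n) A i *: e i - (a *: \sum_(i < n) B i *: e i + \sum_(i < n) D i *: e i).
  rewrite scaler_sumr -big_split -sumrB /=; apply: eq_bigr => i _.
  by rewrite scalerBl scalerDl scalerA.
have K1 a x y i : rdvd p (kap (a *: x + y) i - (a * kap x i + kap y i)).
  move: i; apply/Hrel; rewrite comb -!kapP piL subrr //.
have K2 (c : 'I_n -> R) i : rdvd p (kap (\sum_(j < n) c j *: e j) i - c i).
  move: i; apply/Hrel.
  have -> : \sum_(i < n) (kap (\sum_(j < n) c j *: e j) i - c i) *: e i =
     \sum_(i < n) kap (\sum_(j < n) c j *: e j) i *: e i - \sum_(i < n) c i *: e i.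
    by rewrite -sumrB; apply: eq_bigr => i _; rewrite scalerBl.
  by rewrite -kapP piT ?subrr //; apply: (Tsum He2 Hrel).
have K3 x : torsion_part M p x -> x = \sum_(i < n) kap x i *: e i.
  by move=> hx; rewrite -kapP piT.
pose m := (size rs + n).+1.
have hnm : (n < m)%N by rewrite /m ltnS leq_addl.
pose u (k : 'I_m) := nth 0%N rs k.
have hsum : (\sum_(k < m) u k)%N = n.
  rewrite sum_nth_seq ?hrs /n ?size_nseq //.
  by rewrite /m; lia.
exists (V He2 Hrel 1 u); split.
- exact: (C_all hp He2 Hrel K1 K2 K3 hC hM hnm (leqnn _) hsum).
- by apply: p_part => //; rewrite /m; lia.
- by move=> q hq nass; apply: q_part.
Qed.
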